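(* Let $\Lambda$ be a 2-graph with $\Lambda^{\varepsilon_1}\sqcup\Lambda^{\varepsilon_2}$ finite. Then $(\Lambda^\infty,\sigma)$ is conjugate to the shift of finite type $(\mathsf X^+_{T_\Lambda},\sigma)$, via $x\mapsto(n\mapsto x(n,n+(1,1)))$.
   Context: 2-graph: countable category $\Lambda$ with functor $d:\Lambda\to\mathbb N^2$ with unique factorization; $\Lambda^m=d^{-1}(m)$; $\lambda(m,n)$ the unique factor of degree $n-m$ at position $[m,n]$ for $m\le n\le d(\lambda)$. $\Omega_2$ is the 2-graph with morphisms $\{(m,n)\in\mathbb N^2\times\mathbb N^2: m\le n\}$, composition $(l,m)(m,n)=(l,n)$, degree $d(m,n)=n-m$. $\Lambda^\infty$ is the set of degree-preserving functors $x:\Omega_2\to\Lambda$, with topology generated by $Z(\lambda)=\{y: y(0,d(\lambda))=\lambda\}$ and shifts $\sigma^p(x)(m,n)=x(m+p,n+p)$. $T_\Lambda=(p,q:F_\Lambda\to E_\Lambda)$: $E_\Lambda=(\Lambda^0,\Lambda^{\varepsilon_1},r,s)$; $F_\Lambda$ has vertices $\Lambda^{\varepsilon_2}$, edges $\Lambda^{\varepsilon_1+\varepsilon_2}$, $r(\lambda)=\lambda(0,\varepsilon_2)$, $s(\lambda)=\lambda(\varepsilon_1,\varepsilon_1+\varepsilon_2)$; $p(\lambda)=\lambda(\varepsilon_2,\varepsilon_1+\varepsilon_2)$, $q(\lambda)=\lambda(0,\varepsilon_1)$, and $p=s$, $q=r$ on $\Lambda^{\varepsilon_2}$. $\mathsf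 X^+_T=\{x:\mathbb N^2\to F^1: s(x_n)=r(x_{n+\varepsilon_1}),\ p(x_n)=q(x_{n+\varepsilon_2})\ \forall n\}$ with product topology and $(\sigma^mx)_n=x_{n+m}$. A conjugacy is a homeomorphism commuting with all shifts. *)

(* Defs.v *)
From Stdlib Require Import Arith Lia List ClassicalEpsilon.
Import ListNotations.
Set Implicit Arguments.
Unset Strict Implicit.

Definition N2 : Type := (nat * nat)%type.
Definition add2 (m n : N2) : N2 := (fst m + fst n, snd m + snd n).
Definition sub2 (n m : N2) : N2 := (fst n - fst m, snd n - snd m).
Definition le2b (m n : N2) : bool := Nat.leb (fst m) (fst n) && Nat.leb (snd m) (snd n).
Definition zero2 : N2 := (0, 0).
Definition eps1 : N2 := (1, 0).
Definition eps2 : N2 := (0, 1).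
Definition one2 : N2 := (1, 1).

(* ---------- 2-graphs ----------
   A countable category, presented arrows-only: objects are identified with
   identity morphisms (the vertices Lambda^0); [rg]/[sc] are range/source,
   [comp f g] is the composite "f g" (meaningful when [sc f = rg g]),
   [dg] the degree functor to (N^2,+), with the unique factorisation property. *)
Record TwoGraph := {
  Mor : Type;
  dg : Mor -> N2;
  rg : Mor -> Mor;
  sc : Mor -> Mor;
  comp : Mor -> Mor -> Mor;
  Mor_countable : exists f : Mor -> nat, forall a b, f a = f b -> a = b;
  rg_rg : forall f, rg (rg f) = rg f;
  sc_rg : forall f, sc (rg f) = rg f;
  rg_sc : forall f, rg (sc f) = sc f;
  sc_sc : forall f, sc (sc f) = sc f;
  comp_idl : forall f, comp (rg f) f = f;
  comp_idr : forall f, comp f (sc f) = f;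
  rg_comp : forall f g, sc f = rg g -> rg (comp f g) = rg f;
  sc_comp : forall f g, sc f = rg g -> sc (comp f g) = sc g;
  comp_assoc : forall f g h, sc f = rg g -> sc g = rg h ->
      comp (comp f g) h = comp f (comp g h);
  dg_comp : forall f g, sc f = rg g -> dg (comp f g) = add2 (dg f) (dg g);
  dg_id : forall f, dg (rg f) = zero2;
  ufp : forall l m n, dg l = add2 m n ->
      exists mu nu, (sc mu = rg nu /\ dg mu = m /\ dg nu = n /\ comp mu nu = l) /\
        forall mu' nu', sc mu' = rg nu' -> dg mu' = m -> dg nu' = n ->
          comp mu' nu' = l -> mu' = mu /\ nu' = nu
}.

Arguments dg {_}. Arguments rg {_}. Arguments sc {_}. Arguments comp {_}.

Definition is_factor (L : TwoGraph) (l : Mor L) (m n : N2) (mu : Mor L) : Prop :=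
  exists a b, sc a = rg mu /\ sc mu = rg b /\ dg a = m /\ dg mu = sub2 n m /\
    dg b = sub2 (dg l) n /\ comp (comp a mu) b = l.

(* lambda(m,n): the unique such factor (for m <= n <= d(lambda)) *)
Definition seg (L : TwoGraph) (l : Mor L) (m n : N2) : Mor L :=
  epsilon (inhabits l) (@is_factor L l m n).

Definition edges_finite (L : TwoGraph) : Prop :=
  exists s : list (Mor L), forall l, dg l = eps1 \/ dg l = eps2 -> In l s.

Definition O2 : Type := {p : N2 * N2 | le2b (fst p) (snd p) = true}.
Definition mkO2 (m n : N2) (h : le2b m n = true) : O2 :=
  exist (fun p : N2 * N2 => le2b (fst p) (snd p) = true) (m, n) h.

Definition is_inf_path (L : TwoGraph) (x : O2 -> Mor L) : Prop :=
  (forall o : O2, dg (x o) = sub2 (snd (proj1_sig o)) (fst (proj1_sig o))) /\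
  (forall m n (h : le2b m n = true) (hm : le2b m m = true),
      rg (x (mkO2 h)) = x (mkO2 hm)) /\
  (forall m n (h : le2b m n = true) (hn : le2b n n = true),
      sc (x (mkO2 h)) = x (mkO2 hn)) /\
  (forall l m n (h1 : le2b l m = true) (h2 : le2b m n = true) (h3 : le2b l n = true),
      x (mkO2 h3) = comp (x (mkO2 h1)) (x (mkO2 h2))).

Definition InfPath (L : TwoGraph) : Type := {x : O2 -> Mor L | is_inf_path x}.

Lemma le2b_shift (m n p : N2) : le2b m n = true -> le2b (add2 m p) (add2 n p) = true.
Proof.
  unfold le2b, add2; simpl. intros H.
  apply andb_prop in H as [H1 H2]. apply Nat.leb_le in H1, H2.
  apply andb_true_intro; split; apply Nat.leb_le; lia.
Qed.

Definition shiftO2 (p : N2) (o : O2) : O2 :=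
  mkO2 (le2b_shift p (proj2_sig o)).

Lemma shift_inf_path (L : TwoGraph) (p : N2) (x : O2 -> Mor L) :
  is_inf_path x -> is_inf_path (fun o => x (shiftO2 p o)).
Proof.
  intros [Hd [Hr [Hs Hc]]]. split; [|split; [|split]].
  - intros [[m n] h]. unfold shiftO2; simpl. rewrite Hd. simpl.
    unfold sub2, add2; simpl. f_equal; lia.
  - intros m n h hm. unfold shiftO2. simpl. apply Hr.
  - intros m n h hn. unfold shiftO2. simpl. apply Hs.
  - intros l m n h1 h2 h3. unfold shiftO2. simpl. apply Hc.
Qed.

Definition shift_inf (L : TwoGraph) (p : N2) (x : InfPath L) : InfPath L :=
  exist _ (fun o => proj1_sig x (shiftO2 p o)) (shift_inf_path p (proj2_sig x)).

Definition cyl (L : TwoGraph) (l : Mor L) (y : InfPath L) : Prop :=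
  exists h : le2b zero2 (dg l) = true, proj1_sig y (mkO2 h) = l.

Definition open_inf (L : TwoGraph) (U : InfPath L -> Prop) : Prop :=
  forall x, U x -> exists ls : list (Mor L),
    (forall l, In l ls -> cyl l x) /\
    (forall y, (forall l, In l ls -> cyl l y) -> U y).

Definition F_r (L : TwoGraph) (l : Mor L) := @seg L l zero2 eps2.
Definition F_s (L : TwoGraph) (l : Mor L) := @seg L l eps1 one2.
Definition F_p (L : TwoGraph) (l : Mor L) := @seg L l eps2 one2.
Definition F_q (L : TwoGraph) (l : Mor L) := @seg L l zero2 eps1.

Definition is_in_XT (L : TwoGraph) (x : N2 -> Mor L) : Prop :=
  forall n, dg (x n) = one2 /\
    F_s (x n) = F_r (x (add2 n eps1)) /\
    F_p (x n) = F_q (x (add2 n eps2)).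

Definition XT (L : TwoGraph) : Type := {x : N2 -> Mor L | is_in_XT x}.

Lemma shift_XT_ok (L : TwoGraph) (m : N2) (x : N2 -> Mor L) :
  is_in_XT x -> is_in_XT (fun n => x (add2 n m)).
Proof.
  intros H n. destruct (H (add2 n m)) as [H1 [H2 H3]].
  assert (E1 : add2 (add2 n eps1) m = add2 (add2 n m) eps1)
    by (unfold add2; simpl; f_equal; lia).
  assert (E2 : add2 (add2 n eps2) m = add2 (add2 n m) eps2)
    by (unfold add2; simpl; f_equal; lia).
  rewrite E1, E2. auto.
Qed.

Definition shift_XT (L : TwoGraph) (m : N2) (x : XT L) : XT L :=
  exist _ (fun n => proj1_sig x (add2 n m)) (shift_XT_ok m (proj2_sig x)).

Definition open_XT (L : TwoGraph) (U : XT L -> Prop) : Prop :=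
  forall x, U x -> exists S : list N2,
    forall y, (forall n, In n S -> proj1_sig y n = proj1_sig x n) -> U y.

Definition continuous_wrt (A B : Type) (openA : (A -> Prop) -> Prop)
  (openB : (B -> Prop) -> Prop) (f : A -> B) : Prop :=
  forall V, openB V -> openA (fun a => V (f a)).

Definition homeomorphism (A B : Type) (openA : (A -> Prop) -> Prop)
  (openB : (B -> Prop) -> Prop) (f : A -> B) : Prop :=
  exists g : B -> A, (forall a, g (f a) = a) /\ (forall b, f (g b) = b) /\
    continuous_wrt openA openB f /\ continuous_wrt openB openA g.

Definition conjugacy (L : TwoGraph) (h : InfPath L -> XT L) : Prop :=
  homeomorphism (@open_inf L) (@open_XT L) h /\
  forall p x, h (shift_inf p x) = shift_XT p (h x).

(* Main.v *)
Require Import Defs.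
From Stdlib Require Import Arith List Lia ClassicalEpsilon FunctionalExtensionality ProofIrrelevance.
Import ListNotations.

Lemma dg_sc {L : TwoGraph} (f : Mor L) : dg (sc f) = zero2.
Proof. rewrite <- (rg_sc f). apply dg_id. Qed.

Lemma fact_uniq {L : TwoGraph} {mu nu mu' nu' : Mor L} :
  sc mu = rg nu -> sc mu' = rg nu' -> dg mu = dg mu' -> dg nu = dg nu' ->
  comp mu nu = comp mu' nu' -> mu = mu' /\ nu = nu'.
Proof.
  intros H1 H2 H3 H4 H5.
  destruct (ufp (dg_comp H1)) as [a [b [_ U]]].
  destruct (U mu nu H1 eq_refl eq_refl eq_refl) as [-> ->].
  destruct (U mu' nu' H2 (eq_sym H3) (eq_sym H4) (eq_sym H5)) as [-> ->]. auto.
Qed.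

Lemma is_factor_uniq {L : TwoGraph} {l : Mor L} {m n mu mu'} :
  is_factor l m n mu -> is_factor l m n mu' -> mu = mu'.
Proof.
  intros [a [b [H1 [H2 [H3 [H4 [H5 H6]]]]]]] [a' [b' [H1' [H2' [H3' [H4' [H5' H6']]]]]]].
  assert (Hab : sc (comp a mu) = rg b) by (rewrite sc_comp; auto).
  assert (Hab' : sc (comp a' mu') = rg b') by (rewrite sc_comp; auto).
  destruct (fact_uniq Hab Hab') as [E _].
  - rewrite !dg_comp by auto. congruence.
  - congruence.
  - congruence.
  - destruct (fact_uniq H1 H1'); congruence.
Qed.

Lemma seg_eq {L : TwoGraph} (l : Mor L) m n mu : is_factor l m n mu -> seg l m n = mu.
Proof.
  intros H. unfold seg. apply (is_factor_uniq (l:=l) (m:=m) (n:=n)); auto.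
  apply epsilon_spec. eauto.
Qed.

Lemma seg_split {L : TwoGraph} {mu nu : Mor L} : sc mu = rg nu ->
  seg (comp mu nu) zero2 (dg mu) = mu /\
  seg (comp mu nu) (dg mu) (add2 (dg mu) (dg nu)) = nu.
Proof.
  intros H. split; apply seg_eq.
  - exists (rg mu), nu. rewrite dg_comp by auto. rewrite sc_rg, dg_id, comp_idl.
    destruct (dg mu), (dg nu); unfold sub2, add2, zero2; simpl.
    repeat split; auto; f_equal; lia.
  - exists mu, (sc nu). rewrite dg_comp by auto. rewrite rg_sc, dg_sc.
    rewrite <- (sc_comp H), comp_idr.
    destruct (dg mu), (dg nu); unfold sub2, add2, zero2; simpl.
    repeat split; auto; f_equal; lia.
Qed.


Lemma le2bP (m n : N2) : le2b m n = true <-> fst m <= fst n /\ snd m <= snd n.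
Proof.
  unfold le2b. rewrite Bool.andb_true_iff, !Nat.leb_le. tauto.
Qed.

Lemma le2b_refl (m : N2) : le2b m m = true.
Proof. apply le2bP; lia. Qed.

Definition xv {L : TwoGraph} (x : O2 -> Mor L) (m n : N2) : Mor L :=
  match Bool.bool_dec (le2b m n) true with
  | left h => x (mkO2 h)
  | right _ => x (mkO2 (le2b_refl m))
  end.

Lemma xv_eq {L : TwoGraph} (x : O2 -> Mor L) {m n} (h : le2b m n = true) :
  x (mkO2 h) = xv x m n.
Proof.
  unfold xv. destruct (Bool.bool_dec (le2b m n) true) as [h'|c].
  - f_equal. f_equal. apply proof_irrelevance.
  - congruence.
Qed.

Definition le2 (m n : N2) : Prop := fst m <= fst n /\ snd m <= snd n.

Lemma le2_b {m n} : le2 m n -> le2b m n = true.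
Proof. intros H. apply le2bP. exact H. Qed.

Section IP.
End IP.

Lemma ip_dg {L : TwoGraph} {x : O2 -> Mor L} : is_inf_path x ->
  forall {m n}, le2 m n -> dg (xv x m n) = sub2 n m.
Proof.
  intros [Hd _] m n H. rewrite <- (xv_eq x (le2_b H)). apply Hd.
Qed.

Lemma ip_rg {L : TwoGraph} {x : O2 -> Mor L} : is_inf_path x ->
  forall {m n}, le2 m n -> rg (xv x m n) = xv x m m.
Proof.
  intros [_ [Hr _]] m n H. rewrite <- (xv_eq x (le2_b H)), <- (xv_eq x (le2b_refl m)).
  apply Hr.
Qed.

Lemma ip_sc {L : TwoGraph} {x : O2 -> Mor L} : is_inf_path x ->
  forall {m n}, le2 m n -> sc (xv x m n) = xv x n n.
Proof.
  intros [_ [_ [Hs _]]] m n H. rewrite <- (xv_eq x (le2_b H)), <- (xv_eq x (le2b_refl n)).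
  apply Hs.
Qed.

Lemma ip_comp {L : TwoGraph} {x : O2 -> Mor L} : is_inf_path x ->
  forall {l m n}, le2 l m -> le2 m n -> xv x l n = comp (xv x l m) (xv x m n).
Proof.
  intros [_ [_ [_ Hc]]] l m n H1 H2.
  assert (H3 : le2 l n) by (destruct H1, H2; split; lia).
  rewrite <- (xv_eq x (le2_b H1)), <- (xv_eq x (le2_b H2)), <- (xv_eq x (le2_b H3)).
  apply Hc.
Qed.

Lemma ip_seg {L : TwoGraph} {x : O2 -> Mor L} : is_inf_path x ->
  forall {q m n p}, le2 q m -> le2 m n -> le2 n p ->
  seg (xv x q p) (sub2 m q) (sub2 n q) = xv x m n.
Proof.
  intros X q m n p H1 H2 H3.
  assert (Hqn : le2 q n) by (destruct H1, H2; split; lia).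
  assert (Hqp : le2 q p) by (destruct Hqn, H3; split; lia).
  apply seg_eq. exists (xv x q m), (xv x n p).
  rewrite (ip_sc X H1), (ip_rg X H2), (ip_sc X H2), (ip_rg X H3),
    (ip_dg X H1), (ip_dg X H2), (ip_dg X H3), (ip_dg X Hqp).
  rewrite <- (ip_comp X H1 H2), <- (ip_comp X Hqn H3).
  destruct q, m, n, p; unfold le2, sub2 in *; simpl in *.
  repeat split; auto; f_equal; lia.
Qed.


Ltac le2t := unfold le2, add2, one2, eps1, eps2, zero2 in *; simpl in *; split; simpl; lia.

Definition hfun {L : TwoGraph} (x : O2 -> Mor L) : N2 -> Mor L :=
  fun n => xv x n (add2 n one2).

Lemma hfun_XT {L : TwoGraph} {x : O2 -> Mor L} : is_inf_path x -> is_in_XT (hfun x).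
Proof.
  intros X [a b]. unfold hfun, F_s, F_r, F_p, F_q, add2, one2, eps1, eps2; simpl.
  split; [|split].
  - rewrite (ip_dg X) by le2t. unfold sub2, one2; simpl. f_equal; lia.
  - pose proof (ip_seg X (q:=(a,b)) (m:=(a+1,b)) (n:=(a+1,b+1)) (p:=(a+1,b+1))) as E1.
    pose proof (ip_seg X (q:=(a+1,b)) (m:=(a+1,b)) (n:=(a+1,b+1)) (p:=(a+1+1,b+1))) as E2.
    unfold sub2 in E1, E2; simpl in E1, E2.
    replace (a+1-a) with 1 in E1 by lia. replace (b+1-b) with 1 in E1, E2 by lia.
    replace (b-b) with 0 in E1, E2 by lia. replace (a+1-(a+1)) with 0 in E2 by lia.
    rewrite ?Nat.add_0_r.
    unfold zero2. rewrite E1, E2 by le2t. reflexivity.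
  - pose proof (ip_seg X (q:=(a,b)) (m:=(a,b+1)) (n:=(a+1,b+1)) (p:=(a+1,b+1))) as E1.
    pose proof (ip_seg X (q:=(a,b+1)) (m:=(a,b+1)) (n:=(a+1,b+1)) (p:=(a+1,b+1+1))) as E2.
    unfold sub2 in E1, E2; simpl in E1, E2.
    replace (a+1-a) with 1 in E1, E2 by lia. replace (b+1-b) with 1 in E1 by lia.
    replace (a-a) with 0 in E1, E2 by lia. replace (b+1-(b+1)) with 0 in E2 by lia.
    rewrite ?Nat.add_0_r.
    unfold zero2. rewrite E1, E2 by le2t. reflexivity.
Qed.


Definition Hd {L : TwoGraph} (y : N2 -> Mor L) i j := seg (y (i,j)) zero2 eps1.
Definition Vd {L : TwoGraph} (y : N2 -> Mor L) i j := seg (y (i,j)) zero2 eps2.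
Definition vt {L : TwoGraph} (y : N2 -> Mor L) i j := rg (y (i,j)).

Lemma sq_split {L : TwoGraph} (l : Mor L) a b : dg l = add2 a b ->
  sc (seg l zero2 a) = rg (seg l a (add2 a b)) /\
  comp (seg l zero2 a) (seg l a (add2 a b)) = l /\
  dg (seg l zero2 a) = a /\ dg (seg l a (add2 a b)) = b.
Proof.
  intros H. destruct (ufp H) as [mu [nu [[H1 [H2 [H3 H4]]] _]]].
  destruct (seg_split H1) as [E1 E2]. subst.
  rewrite E1, E2. auto.
Qed.



Lemma sq1 {L : TwoGraph} {y : N2 -> Mor L} (Y : is_in_XT y) i j :
  sc (Hd y i j) = rg (Vd y (i+1) j) /\ comp (Hd y i j) (Vd y (i+1) j) = y (i,j)
  /\ dg (Hd y i j) = eps1.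
Proof.
  destruct (Y (i,j)) as [D [Fs _]].
  destruct (sq_split (y (i,j)) eps1 eps2 D) as [A [B [C _]]].
  unfold F_s, F_r, add2 in Fs; simpl in Fs. rewrite Nat.add_0_r in Fs.
  change (add2 eps1 eps2) with one2 in *. unfold Hd, Vd. rewrite <- Fs. auto.
Qed.

Lemma sq2 {L : TwoGraph} {y : N2 -> Mor L} (Y : is_in_XT y) i j :
  sc (Vd y i j) = rg (Hd y i (j+1)) /\ comp (Vd y i j) (Hd y i (j+1)) = y (i,j)
  /\ dg (Vd y i j) = eps2.
Proof.
  destruct (Y (i,j)) as [D [_ Fp]].
  destruct (sq_split (y (i,j)) eps2 eps1 D) as [A [B [C _]]].
  unfold F_p, F_q, add2 in Fp; simpl in Fp. rewrite Nat.add_0_r in Fp.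
  change (add2 eps2 eps1) with one2 in *. unfold Hd, Vd. rewrite <- Fp. auto.
Qed.

Lemma Hd_rg {L : TwoGraph} {y : N2 -> Mor L} (Y : is_in_XT y) i j : rg (Hd y i j) = vt y i j.
Proof.
  destruct (sq1 Y i j) as [A [B _]]. unfold vt. rewrite <- B, rg_comp; auto.
Qed.

Lemma Vd_rg {L : TwoGraph} {y : N2 -> Mor L} (Y : is_in_XT y) i j : rg (Vd y i j) = vt y i j.
Proof.
  destruct (sq2 Y i j) as [A [B _]]. unfold vt. rewrite <- B, rg_comp; auto.
Qed.

Lemma Hd_sc {L : TwoGraph} {y : N2 -> Mor L} (Y : is_in_XT y) i j : sc (Hd y i j) = vt y (S i) j.
Proof.
  destruct (sq1 Y i j) as [A _]. rewrite A, Vd_rg by auto. f_equal. lia.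
Qed.

Lemma Vd_sc {L : TwoGraph} {y : N2 -> Mor L} (Y : is_in_XT y) i j : sc (Vd y i j) = vt y i (S j).
Proof.
  destruct (sq2 Y i j) as [A _]. rewrite A, Hd_rg by auto. f_equal. lia.
Qed.

Lemma vt_rg {L : TwoGraph} (y : N2 -> Mor L) i j : rg (vt y i j) = vt y i j.
Proof. apply rg_rg. Qed.
Lemma vt_sc {L : TwoGraph} (y : N2 -> Mor L) i j : sc (vt y i j) = vt y i j.
Proof. apply sc_rg. Qed.
Lemma vt_dg {L : TwoGraph} (y : N2 -> Mor L) i j : dg (vt y i j) = zero2.
Proof. apply dg_id. Qed.

Fixpoint hp {L : TwoGraph} (y : N2 -> Mor L) (i k j : nat) : Mor L :=
  match k with
  | 0 => vt y i j
  | S k => comp (Hd y i j) (hp y (S i) k j)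
  end.

Fixpoint vp {L : TwoGraph} (y : N2 -> Mor L) (i j k : nat) : Mor L :=
  match k with
  | 0 => vt y i j
  | S k => comp (Vd y i j) (vp y i (S j) k)
  end.

Lemma hp_rg {L : TwoGraph} {y : N2 -> Mor L} (Y : is_in_XT y) k : forall i j,
  rg (hp y i k j) = vt y i j /\ sc (hp y i k j) = vt y (i+k) j /\ dg (hp y i k j) = (k,0).
Proof.
  induction k as [|k IH]; intros i j; simpl.
  - rewrite vt_rg, vt_sc, vt_dg, Nat.add_0_r. auto.
  - destruct (IH (S i) j) as [A [B C]].
    assert (E : sc (Hd y i j) = rg (hp y (S i) k j)) by (rewrite A, Hd_sc; auto).
    rewrite rg_comp, sc_comp, dg_comp, Hd_rg, B, C by auto.
    destruct (sq1 Y i j) as [_ [_ D]]. rewrite D.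
    repeat split; try reflexivity; f_equal; lia.
Qed.

Lemma vp_rg {L : TwoGraph} {y : N2 -> Mor L} (Y : is_in_XT y) k : forall i j,
  rg (vp y i j k) = vt y i j /\ sc (vp y i j k) = vt y i (j+k) /\ dg (vp y i j k) = (0,k).
Proof.
  induction k as [|k IH]; intros i j; simpl.
  - rewrite vt_rg, vt_sc, vt_dg, Nat.add_0_r. auto.
  - destruct (IH i (S j)) as [A [B C]].
    assert (E : sc (Vd y i j) = rg (vp y i (S j) k)) by (rewrite A, Vd_sc; auto).
    rewrite rg_comp, sc_comp, dg_comp, Vd_rg, B, C by auto.
    destruct (sq2 Y i j) as [_ [_ D]]. rewrite D.
    repeat split; try reflexivity; f_equal; lia.
Qed.

Ltac cmp Y := repeat first [ rewrite (proj1 (hp_rg Y _ _ _)) | rewrite (proj1 (proj2 (hp_rg Y _ _ _)))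
  | rewrite (proj1 (vp_rg Y _ _ _)) | rewrite (proj1 (proj2 (vp_rg Y _ _ _)))
  | rewrite (Hd_rg Y) | rewrite (Hd_sc Y) | rewrite (Vd_rg Y) | rewrite (Vd_sc Y)
  | rewrite rg_comp by (cmp Y) | rewrite sc_comp by (cmp Y) ];
  f_equal; lia.

Lemma hp_app {L : TwoGraph} {y : N2 -> Mor L} (Y : is_in_XT y) a c : forall i j,
  hp y i (a+c) j = comp (hp y i a j) (hp y (i+a) c j).
Proof.
  induction a as [|a IH]; intros i j; simpl.
  - rewrite Nat.add_0_r. rewrite <- (proj1 (hp_rg Y c i j)). rewrite comp_idl. auto.
  - rewrite IH, comp_assoc by cmp Y. do 2 f_equal. f_equal. lia.
Qed.

Lemma vp_app {L : TwoGraph} {y : N2 -> Mor L} (Y : is_in_XT y) a c : forall i j,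
  vp y i j (a+c) = comp (vp y i j a) (vp y i (j+a) c).
Proof.
  induction a as [|a IH]; intros i j; simpl.
  - rewrite Nat.add_0_r. rewrite <- (proj1 (vp_rg Y c i j)). rewrite comp_idl. auto.
  - rewrite IH, comp_assoc by cmp Y. do 2 f_equal. f_equal. lia.
Qed.

Lemma comm1 {L : TwoGraph} {y : N2 -> Mor L} (Y : is_in_XT y) b : forall i j,
  comp (vp y i j b) (Hd y i (j+b)) = comp (Hd y i j) (vp y (S i) j b).
Proof.
  induction b as [|b IH]; intros i j; simpl.
  - rewrite Nat.add_0_r. rewrite <- (Hd_rg Y), comp_idl.
    rewrite <- (Hd_sc Y), comp_idr. auto.
  - rewrite comp_assoc by cmp Y.
    replace (j + S b) with (S j + b) by lia. rewrite IH.
    rewrite <- comp_assoc by cmp Y.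
    destruct (sq2 Y i j) as [_ [E _]]. replace (j+1) with (S j) in E by lia. rewrite E.
    destruct (sq1 Y i j) as [A [E' _]]. rewrite <- E'.
    replace (i+1) with (S i) in * by lia.
    rewrite comp_assoc by cmp Y. reflexivity.
Qed.

Lemma comm {L : TwoGraph} {y : N2 -> Mor L} (Y : is_in_XT y) a b : forall i j,
  comp (vp y i j b) (hp y i a (j+b)) = comp (hp y i a j) (vp y (i+a) j b).
Proof.
  induction a as [|a IH]; intros i j; simpl.
  - rewrite Nat.add_0_r. rewrite <- (proj1 (proj2 (vp_rg Y b i j))), comp_idr.
    rewrite <- (proj1 (vp_rg Y b i j)). rewrite comp_idl. auto.
  - rewrite <- comp_assoc by cmp Y. rewrite comm1 by auto.
    rewrite comp_assoc by cmp Y. rewrite IH.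
    rewrite comp_assoc by cmp Y. replace (i + S a) with (S i + a) by lia. reflexivity.
Qed.


Definition Pth {L : TwoGraph} (y : N2 -> Mor L) (m n : N2) : Mor L :=
  comp (hp y (fst m) (fst n - fst m) (snd m)) (vp y (fst n) (snd m) (snd n - snd m)).

Lemma Pth_props {L : TwoGraph} {y : N2 -> Mor L} (Y : is_in_XT y) m n : le2 m n ->
  dg (Pth y m n) = sub2 n m /\ rg (Pth y m n) = vt y (fst m) (snd m) /\
  sc (Pth y m n) = vt y (fst n) (snd n).
Proof.
  destruct m as [m1 m2], n as [n1 n2]. intros [H1 H2]; simpl in *. unfold Pth; simpl.
  assert (E : sc (hp y m1 (n1 - m1) m2) = rg (vp y n1 m2 (n2 - m2))) by cmp Y.
  rewrite dg_comp, rg_comp, sc_comp by exact E.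
  destruct (hp_rg Y (n1-m1) m1 m2) as [A [B C]].
  destruct (vp_rg Y (n2-m2) n1 m2) as [A' [B' C']].
  rewrite A, B', C, C'. unfold add2, sub2; simpl.
  repeat split; f_equal; lia.
Qed.

Lemma Pth_refl {L : TwoGraph} (y : N2 -> Mor L) m : Pth y m m = vt y (fst m) (snd m).
Proof.
  unfold Pth. rewrite !Nat.sub_diag. simpl. rewrite <- (vt_sc y) at 2. apply comp_idr.
Qed.

Lemma Pth_comp {L : TwoGraph} {y : N2 -> Mor L} (Y : is_in_XT y) l m n :
  le2 l m -> le2 m n -> Pth y l n = comp (Pth y l m) (Pth y m n).
Proof.
  destruct l as [l1 l2], m as [m1 m2], n as [n1 n2]. intros [H1 H2] [H3 H4]; simpl in *.
  set (a := m1 - l1). assert (Ea : m1 = l1 + a) by lia. clearbody a. subst m1.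
  set (b := m2 - l2). assert (Eb : m2 = l2 + b) by lia. clearbody b. subst m2.
  set (c := n1 - (l1 + a)). assert (Ec : n1 = l1 + a + c) by lia. clearbody c. subst n1.
  set (d := n2 - (l2 + b)). assert (Ed : n2 = l2 + b + d) by lia. clearbody d. subst n2.
  unfold Pth; simpl.
  replace (l1 + a + c - l1) with (a + c) by lia.
  replace (l2 + b + d - l2) with (b + d) by lia.
  replace (l1 + a - l1) with a by lia.
  replace (l2 + b - l2) with b by lia.
  replace (l1 + a + c - (l1 + a)) with c by lia.
  replace (l2 + b + d - (l2 + b)) with d by lia.
  rewrite (hp_app Y), (vp_app Y).
  rewrite (comp_assoc (f := hp y l1 a l2)) by cmp Y.
  rewrite (comp_assoc (f := hp y l1 a l2) (g := vp y (l1 + a) l2 b)) by cmp Y.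
  rewrite <- (comp_assoc (f := vp y (l1 + a) l2 b)) by cmp Y.
  rewrite (comm Y).
  rewrite (comp_assoc (f := hp y (l1 + a) c l2)) by cmp Y.
  reflexivity.
Qed.

Definition gfun {L : TwoGraph} (y : N2 -> Mor L) : O2 -> Mor L :=
  fun o => Pth y (fst (proj1_sig o)) (snd (proj1_sig o)).

Lemma gfun_ip {L : TwoGraph} {y : N2 -> Mor L} (Y : is_in_XT y) : is_inf_path (gfun y).
Proof.
  split; [|split; [|split]].
  - intros [[m n] h]. unfold gfun; simpl. apply le2bP in h. apply (Pth_props Y _ _ h).
  - intros m n h hm. unfold gfun, mkO2; simpl. apply le2bP in h.
    rewrite (proj1 (proj2 (Pth_props Y _ _ h))), Pth_refl. auto.
  - intros m n h hm. unfold gfun, mkO2; simpl. apply le2bP in h.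
    rewrite (proj2 (proj2 (Pth_props Y _ _ h))), Pth_refl. auto.
  - intros l m n h1 h2 h3. unfold gfun, mkO2; simpl. apply le2bP in h1, h2.
    apply (Pth_comp Y _ _ _ h1 h2).
Qed.

Lemma xv_gfun {L : TwoGraph} (y : N2 -> Mor L) m n : le2 m n -> xv (gfun y) m n = Pth y m n.
Proof.
  intros H. rewrite <- (xv_eq _ (le2_b H)). reflexivity.
Qed.

Lemma Pth_sq {L : TwoGraph} {y : N2 -> Mor L} (Y : is_in_XT y) n : Pth y n (add2 n one2) = y n.
Proof.
  destruct n as [i j]. unfold Pth, add2, one2; simpl.
  replace (i + 1 - i) with 1 by lia. replace (j + 1 - j) with 1 by lia. simpl.
  rewrite <- (Hd_sc Y), comp_idr. rewrite <- (Vd_sc Y), comp_idr.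
  replace (S i) with (i+1) by lia. apply (sq1 Y).
Qed.


Lemma sig_ext {A : Type} {P : A -> Prop} (a b : sig P) : proj1_sig a = proj1_sig b -> a = b.
Proof. destruct a, b; simpl; intros ->. f_equal. apply proof_irrelevance. Qed.

Lemma le2_0 n : le2 zero2 n.
Proof. unfold le2, zero2; simpl; lia. Qed.



Lemma hx_Hd {L : TwoGraph} {x : O2 -> Mor L} (X : is_inf_path x) i j :
  Hd (hfun x) i j = xv x (i,j) (i+1,j) /\ Vd (hfun x) i j = xv x (i,j) (i,j+1)
  /\ vt (hfun x) i j = xv x (i,j) (i,j).
Proof.
  unfold Hd, Vd, vt, hfun, add2, one2; simpl.
  pose proof (ip_seg X (q:=(i,j)) (m:=(i,j)) (n:=(i+1,j)) (p:=(i+1,j+1))) as E1.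
  pose proof (ip_seg X (q:=(i,j)) (m:=(i,j)) (n:=(i,j+1)) (p:=(i+1,j+1))) as E2.
  unfold sub2 in E1, E2; simpl in E1, E2.
  replace (i+1-i) with 1 in E1 by lia. replace (j+1-j) with 1 in E2 by lia.
  rewrite !Nat.sub_diag in E1, E2.
  split; [|split].
  - apply E1; unfold le2; simpl; lia.
  - apply E2; unfold le2; simpl; lia.
  - apply (ip_rg X). unfold le2; simpl; lia.
Qed.

Lemma hx_hp {L : TwoGraph} {x : O2 -> Mor L} (X : is_inf_path x) k : forall i j,
  hp (hfun x) i k j = xv x (i,j) (i+k,j).
Proof.
  induction k as [|k IH]; intros i j; simpl.
  - rewrite Nat.add_0_r. apply (hx_Hd X).
  - rewrite IH, (proj1 (hx_Hd X i j)).
    replace (S i) with (i+1) by lia.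
    rewrite <- (ip_comp X); [f_equal; f_equal; lia| |]; unfold le2; simpl; lia.
Qed.

Lemma hx_vp {L : TwoGraph} {x : O2 -> Mor L} (X : is_inf_path x) k : forall i j,
  vp (hfun x) i j k = xv x (i,j) (i,j+k).
Proof.
  induction k as [|k IH]; intros i j; simpl.
  - rewrite Nat.add_0_r. apply (hx_Hd X).
  - rewrite IH, (proj1 (proj2 (hx_Hd X i j))).
    replace (S j) with (j+1) by lia.
    rewrite <- (ip_comp X); [f_equal; f_equal; lia| |]; unfold le2; simpl; lia.
Qed.

Lemma hx_Pth {L : TwoGraph} {x : O2 -> Mor L} (X : is_inf_path x) m n : le2 m n ->
  Pth (hfun x) m n = xv x m n.
Proof.
  destruct m as [m1 m2], n as [n1 n2]. intros [H1 H2]; simpl in *. unfold Pth; simpl.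
  rewrite (hx_hp X), (hx_vp X).
  replace (m1 + (n1 - m1)) with n1 by lia. replace (m2 + (n2 - m2)) with n2 by lia.
  rewrite <- (ip_comp X); auto; unfold le2; simpl; lia.
Qed.

Lemma hp_local {L : TwoGraph} (y y' : N2 -> Mor L) j k : forall i,
  (forall t, t <= k -> y (i+t, j) = y' (i+t, j)) -> hp y i k j = hp y' i k j.
Proof.
  induction k as [|k IH]; intros i H; simpl.
  - unfold vt. rewrite <- (Nat.add_0_r i), H; auto.
  - unfold Hd. rewrite <- (Nat.add_0_r i) at 1 3. rewrite H by lia. rewrite Nat.add_0_r.
    f_equal. apply IH. intros t Ht. replace (S i + t) with (i + S t) by lia. apply H. lia.
Qed.

Lemma vp_local {L : TwoGraph} (y y' : N2 -> Mor L) i k : forall j,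
  (forall t, t <= k -> y (i, j+t) = y' (i, j+t)) -> vp y i j k = vp y' i j k.
Proof.
  induction k as [|k IH]; intros j H; simpl.
  - unfold vt. rewrite <- (Nat.add_0_r j), H; auto.
  - unfold Vd. rewrite <- (Nat.add_0_r j) at 1 3. rewrite H by lia. rewrite Nat.add_0_r.
    f_equal. apply IH. intros t Ht. replace (S j + t) with (j + S t) by lia. apply H. lia.
Qed.

Lemma Pth_local {L : TwoGraph} (y y' : N2 -> Mor L) d :
  (forall i j, i <= fst d -> j <= snd d -> y (i,j) = y' (i,j)) ->
  Pth y zero2 d = Pth y' zero2 d.
Proof.
  destruct d as [d1 d2]. intros H. unfold Pth, zero2; simpl.
  rewrite !Nat.sub_0_r. f_equal.
  - apply hp_local. intros t Ht. apply H; simpl; lia.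
  - apply vp_local. intros t Ht. apply H; simpl; lia.
Qed.

Definition box (d : N2) : list N2 :=
  flat_map (fun i => map (fun j => (i,j)) (seq 0 (S (snd d)))) (seq 0 (S (fst d))).

Lemma in_box d i j : i <= fst d -> j <= snd d -> In (i,j) (box d).
Proof.
  intros H1 H2. unfold box. apply in_flat_map. exists i. split.
  - apply in_seq. lia.
  - apply in_map_iff. exists j. split; auto. apply in_seq. lia.
Qed.


Definition hmap {L : TwoGraph} (x : InfPath L) : XT L :=
  exist _ (hfun (proj1_sig x)) (hfun_XT (proj2_sig x)).
Definition gmap {L : TwoGraph} (y : XT L) : InfPath L :=
  exist _ (gfun (proj1_sig y)) (gfun_ip (proj2_sig y)).

Theorem lemma4p9 (L : TwoGraph) (Hfin : edges_finite L) :
  exists h : InfPath L -> XT L,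
    (forall (x : InfPath L) (n : N2) (hn : le2b n (add2 n one2) = true),
        proj1_sig (h x) n = proj1_sig x (mkO2 hn)) /\
    conjugacy h.
Proof.
  exists hmap. split; [|split].
  - intros x n hn. simpl. unfold hfun. symmetry. apply xv_eq.
  - exists gmap. split; [|split; [|split]].
    + intros [x X]. apply sig_ext; simpl. apply functional_extensionality.
      intros [[m n] h]. unfold gfun; simpl. pose proof h as h2. apply le2bP in h2.
      rewrite (hx_Pth X m n h2). symmetry. apply (xv_eq x (m:=m) (n:=n) h).
    + intros [y Y]. apply sig_ext; simpl. apply functional_extensionality.
      intros n. unfold hfun. rewrite xv_gfun.
      * apply (Pth_sq Y).
      * destruct n; unfold le2, add2; simpl; lia.
    + intros V HV [x X] Hx. destruct (HV _ Hx) as [S HS].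
      exists (map (fun n => xv x zero2 (add2 n one2)) S). split.
      * intros l Hl. apply in_map_iff in Hl. destruct Hl as [n [<- _]].
        assert (Hd : dg (xv x zero2 (add2 n one2)) = add2 n one2).
        { rewrite (ip_dg X) by apply le2_0. destruct n; unfold sub2, add2; simpl; f_equal; lia. }
        assert (h : le2b zero2 (dg (xv x zero2 (add2 n one2))) = true) by (apply le2_b, le2_0).
        exists h. simpl. rewrite (xv_eq x h), Hd. reflexivity.
      * intros [y Y] Hy. apply HS. intros n Hn. simpl. unfold hfun.
        assert (Hc := Hy _ (in_map (fun n => xv x zero2 (add2 n one2)) _ _ Hn)).
        destruct Hc as [h Hc]. simpl in Hc. rewrite (xv_eq y h) in Hc.
        rewrite (ip_dg X) in Hc by apply le2_0.
        replace (sub2 (add2 n one2) zero2) with (add2 n one2) in Hc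
          by (destruct n; unfold sub2, add2; simpl; f_equal; lia).
        assert (Hn1 : le2 n (add2 n one2)) by (destruct n; unfold le2, add2; simpl; lia).
        rewrite <- (ip_seg Y (le2_0 n) Hn1 (conj (le_n _) (le_n _))).
        rewrite <- (ip_seg X (le2_0 n) Hn1 (conj (le_n _) (le_n _))).
        rewrite Hc. reflexivity.
    + intros U HU [y Y] Hy. destruct (HU _ Hy) as [ls [Hls HU']].
      exists (flat_map (fun l => box (dg l)) ls).
      intros [y' Y'] Hag. apply HU'. intros l Hl.
      destruct (Hls l Hl) as [h Hc]. exists h. simpl in *.
      transitivity (gfun y (mkO2 h)); [|exact Hc]. unfold gfun; simpl. apply Pth_local.
      intros i j Hi Hj. apply (Hag (i,j)). apply in_flat_map. exists l. split; auto.
      apply in_box; auto.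
  - intros p [x X]. apply sig_ext; simpl. apply functional_extensionality. intros n.
    unfold hfun. assert (Hn : le2b n (add2 n one2) = true) by
      (apply le2_b; destruct n; unfold le2, add2; simpl; lia).
    rewrite <- (xv_eq _ Hn). unfold shiftO2, mkO2 at 2; simpl.
    rewrite (xv_eq x).
    f_equal. destruct n, p; unfold add2, one2; simpl; f_equal; lia.
Qed.
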